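(* Let $(W,\omega^W)$ be a vertex operator algebra and $\omega^1,\omega^2\in\operatorname{Sc}(W,\omega^W)$. If there exists a semi-conformal subalgebra $(U,\omega^2)$ of $(W,\omega^W)$ with $\omega^1\in U$, then $C_W(C_W(\langle\omega^1\rangle))\subseteq C_W(C_W(\langle\omega^2\rangle))$.
   Context: A semi-conformal subalgebra $(U,\omega')$ of a vertex operator algebra $(W,\omega^W)$ is a vertex subalgebra $U$ with a vector $\omega'\in U$ making it a vertex operator algebra such that $\omega^W_n|_U=\omega'_n|_U$ for all $n\ge 0$; $\omega'$ is then a semi-conformal vector, and $\operatorname{Sc}(W,\omega^W)$ is the set of these. $C_W(U)=\{v\in W: u_nv=0\ \forall u\in U,\ n\ge0\}$ is the commutant, and $\langle\omega'\rangle$ is the vertex subalgebra generated by $\omega'$ and $\mathbf 1$. *)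

(* Defs.v *)
(* Vertex operator algebras are developed from scratch here,
   following the Frenkel–Lepowsky–Meurman / Lepowsky–Li definition, with the
   Jacobi identity written in its component (Borcherds) form. *)
From HB Require Import structures.
From mathcomp Require Import all_boot all_order all_algebra.
Set Implicit Arguments. Unset Strict Implicit. Unset Printing Implicit Defensive.
Import Order.TTheory GRing.Theory Num.Theory.
Local Open Scope ring_scope.

Definition zbinom (p : int) (i : nat) : int :=
  match p with
  | Posz m => ('C(m, i))%:Z
  | Negz m => (-1) ^+ i * ('C(m + i, i))%:Z   (* Negz m = -(m+1) *)
  end.

Section VOA.
Variables (F : numClosedFieldType) (W : lmodType F).
(* Y u n v  is the mode  u_n v  (coefficient of z^{-n-1} in Y(u,z)v) *)
Variable Y : W -> int -> W -> W.
Variable one : W.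

Definition subspace (P : W -> Prop) : Prop :=
  P 0 /\ forall (a : F) u v, P u -> P v -> P (a *: u + v).

Definition vertex_subalgebra (P : W -> Prop) : Prop :=
  subspace P /\ P one /\ forall u v (n : int), P u -> P v -> P (Y u n v).

Definition is_VOA (P : W -> Prop) (om : W) : Prop :=
  let L (n : int) := Y om (n + 1) in
  vertex_subalgebra P /\ P om /\
  (forall (a : F) u u' v (n : int), P u -> P u' -> P v ->
      Y (a *: u + u') n v = a *: Y u n v + Y u' n v) /\
  (forall (a : F) u v v' (n : int), P u -> P v -> P v' ->
      Y u n (a *: v + v') = a *: Y u n v + Y u n v') /\
  (forall u v, P u -> P v -> exists N : int, forall n : int, N <= n -> Y u n v = 0) /\
  (forall v (n : int), P v -> Y one n v = if n == -1 then v else 0) /\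
  (forall v, P v -> Y v (-1) one = v /\ forall n : nat, Y v n%:Z one = 0) /\
  (* Jacobi identity, in components (sums are finite by truncation) *)
  (forall u v w (p q r : int), P u -> P v -> P w ->
     exists N : nat, forall M : nat, (N <= M)%N ->
       \sum_(i < M) (zbinom p i)%:~R *: Y (Y u (r + i%:Z) v) (p + q - i%:Z) w
       = \sum_(i < M) ((-1) ^+ i * (zbinom r i)%:~R) *:
            (Y u (p + r - i%:Z) (Y v (q + i%:Z) w)
             - ((-1 : F) ^ r) *: Y v (q + r - i%:Z) (Y u (p + i%:Z) w))) /\
  (exists c : F, forall (m n : int) v, P v ->
     L m (L n v) - L n (L m v) =
       (m - n)%:~R *: L (m + n) v
       + (if m + n == 0 then (((m ^+ 3 - m)%:~R / 12%:R) * c) *: v else 0)) /\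
  (forall v w (n : int), P v -> P w -> Y (L (-1) v) n w = - (n%:~R *: Y v (n - 1) w)) /\
  (forall v, P v -> exists (k : nat) (ns : 'I_k -> int) (ws : 'I_k -> W),
      (forall i, P (ws i) /\ L 0 (ws i) = (ns i)%:~R *: ws i) /\
      v = \sum_(i < k) ws i) /\
  (forall n : int, exists (k : nat) (b : 'I_k -> W), (forall i, P (b i)) /\
      forall v, P v -> L 0 v = n%:~R *: v ->
        exists c : 'I_k -> F, v = \sum_(i < k) c i *: b i) /\
  (exists N : int, forall (n : int) v, P v -> n < N -> L 0 v = n%:~R *: v -> v = 0).

Variable omW : W.

Definition semiconformal_subalgebra (U : W -> Prop) (om' : W) : Prop :=
  vertex_subalgebra U /\ U om' /\ is_VOA U om' /\
  forall (n : nat) u, U u -> Y omW n%:Z u = Y om' n%:Z u.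

Definition semiconformal_vector (om' : W) : Prop :=
  exists U, semiconformal_subalgebra U om'.

Definition commutant (S : W -> Prop) : W -> Prop :=
  fun v => forall u, S u -> forall n : nat, Y u n%:Z v = 0.

Definition generated (om' : W) : W -> Prop :=
  fun v => forall S, vertex_subalgebra S -> S om' -> S v.

End VOA.

(* Main.v *)
Require Import Defs.
From HB Require Import structures.
From mathcomp Require Import all_boot all_order all_algebra.
Import Order.TTheory GRing.Theory Num.Theory.
Local Open Scope ring_scope.

Theorem lemma2p5 (F : numClosedFieldType) (W : lmodType F)
  (Y : W -> int -> W -> W) (one omW : W)
  (HW : is_VOA Y one (fun _ => True) omW)
  (om1 om2 : W)
  (H1 : semiconformal_vector Y one omW om1)
  (H2 : semiconformal_vector Y one omW om2)
  (HU : exists U, semiconformal_subalgebra Y one omW U om2 /\ U om1) :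
  forall v, commutant Y (commutant Y (generated Y one om1)) v ->
            commutant Y (commutant Y (generated Y one om2)) v.
Proof.
move: HW; rewrite /is_VOA /=.
move=> [HVS [_ [Hlin1 [Hlin2 [Htr [Hvac [Hcr [Hjac [Hvir [Hder _]]]]]]]]]].
case: HU => U [[HUvs [HUom [HUvoa Hsc]]] HU1].
move=> v Hv x Hx n.
have Y0 : forall a k, Y a k 0 = 0.
  move=> a k; have := Hlin2 1 a 0 0 k I I I.
  rewrite !scale1r addr0 => H.
  by apply: (@addIr _ (Y a k 0)); rewrite add0r -H.
have Hox : Y om2 0 x = 0.
  by apply: (Hx om2 _ 0%N) => S _ ; apply.
have step : forall u (m : nat), U u -> Y u (m.+1)%:Z x = 0 -> Y u m%:Z x = 0.
  move=> u m Uu Hm.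
  have [N HN] := Hjac om2 u x 0 (m.+1)%:Z 0 I I I.
  have := HN (maxn N 1) (leq_maxl _ _).
  have Hpos : (0 < maxn N 1)%N by rewrite leq_max orbT.
  rewrite (bigD1 (Ordinal Hpos)) //= [X in _ + X = _]big1; last first.
    move=> [i Hi] /= Hne; have : i != 0%N.
      by apply: contra Hne => /eqP Hi0; apply/eqP; apply: val_inj.
    by case: i {Hi Hne} => // i _; rewrite /= bin0n scale0r.
  rewrite (bigD1 (Ordinal Hpos)) //= [X in _ = _ + X]big1; last first.
    move=> [i Hi] /= Hne; have : i != 0%N.
      by apply: contra Hne => /eqP Hi0; apply/eqP; apply: val_inj.
    by case: i {Hi Hne} => // i _; rewrite /= bin0n mulr0 scale0r.
  rewrite !add0r bin0 expr0 mul1r expr0z !scale1r.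
  rewrite !subr0 !addr0 Hm Y0 Hox Y0 subr0 -(Hsc 0%N u Uu).
  have -> : Y omW 0 u = Y omW (-1 + 1) u by [].
  rewrite Hder // => /eqP; rewrite oppr_eq0 => /eqP H.
  have : (m.+1%:Z%:~R : F) != 0 by rewrite pnatr_eq0.
  move=> Hnz; have := congr1 (fun w => (m.+1%:Z%:~R : F)^-1 *: w) H.
  rewrite scalerA mulVf // scale1r scaler0.
  by have -> : (m.+1%:Z - 1 = m%:Z) by rewrite -addn1 PoszD addrK.
apply: (Hv x _ n) => u Gu m.
have Uu : U u by exact: Gu HUvs HU1.
have [N HN] := Htr u x I I.
suff: forall k m : nat, N <= m%:Z + k%:Z -> Y u m%:Z x = 0.
  move=> H; apply: (H `|N|%N); apply: (le_trans (ler_norm N)).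
  by rewrite abszE lerDr.
elim=> [|k IH] m0 Hle; first by apply: HN; rewrite addr0 in Hle.
apply: step => //; apply: IH.
by have -> : ((m0.+1)%:Z + k%:Z) = m0%:Z + (k.+1)%:Z by rewrite -!PoszD addSnnS.
Qed.
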